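(* Let $n\ge3$, $r\ge2$, $2\le k\le n-1$, and let $X$ be a continuous random variable. Then both \[ E[X(n)\mid X(n-k)=u,\ X(n+r)=v]=\frac{ru+kv}{k+r}\qquad (l_F<u<v<r_F) \] and \[ E[X(n)\mid X(n-k+1)=u_2,\ X(n+r)=v]=\frac{ru_2+(k-1)v}{r+k-1}\qquad (l_F<u<u_2<v<r_F) \] hold if and only if $l_F>-\infty$, $r_F=\infty$ and $F(x)=1-e^{-c(x-l_F)}$ for $x\ge l_F$, for some constant $c>0$.
   Context: $X_1,X_2,\dots$ are i.i.d. copies of $X$ with distribution function $F$; $l_F=\inf\{x:F(x)>0\}$, $r_F=\sup\{x:F(x)<1\}$. Upper record times: $L(1)=1$, $L(m)=\min\{j>L(m-1): X_j>X_{L(m-1)}\}$; upper record values $X(m)=X_{L(m)}$. With $R(x)=-\ln(1-F(x))$, conditional expectations given $X(n-k)=u$, $X(n+r)=v$ are taken with respect to the conditional density $\frac{(k+r-1)!}{(k-1)!(r-1)!}[\frac{R(t)-R(u)}{R(v)-R(u)}]^{k-1}[\frac{R(v)-R(t)}{R(v)-R(u)}]^{r-1}\frac{R'(t)}{R(v)-R(u)}$, $u<t<v$. *)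

(* Defs.v *)
From Stdlib Require Import Reals Arith.
Open Scope R_scope.

Definition is_cont_dist_fun (F : R -> R) : Prop :=
  (forall x y, x <= y -> F x <= F y) /\
  (forall eps, 0 < eps -> exists M, forall x, x <= M -> Rabs (F x) < eps) /\
  (forall eps, 0 < eps -> exists M, forall x, M <= x -> Rabs (F x - 1) < eps) /\
  continuity F.

(* l_F < u, where l_F = inf {x | F x > 0} (possibly -infinity) *)
Definition lF_lt (F : R -> R) (u : R) : Prop := exists x, x < u /\ 0 < F x.
(* v < r_F, where r_F = sup {x | F x < 1} (possibly +infinity) *)
Definition lt_rF (F : R -> R) (v : R) : Prop := exists x, v < x /\ F x < 1.

(* l is the (finite) infimum of {x | F x > 0}, i.e. l = l_F > -infinity *)
Definition is_lF (F : R -> R) (l : R) : Prop :=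
  (forall x, 0 < F x -> l <= x) /\
  (forall b, (forall x, 0 < F x -> b <= x) -> b <= l).

Definition rF_infinite (F : R -> R) : Prop := forall x, F x < 1.

(* R(x) = -ln(1 - F(x)) and its derivative R'(x) = f(x)/(1 - F(x)),
   where f is the density (derivative of F). *)
Definition Rh (F : R -> R) (x : R) : R := - ln (1 - F x).
Definition Rh' (F f : R -> R) (x : R) : R := f x / (1 - F x).

(* conditional density of X(n) given X(n-k)=u, X(n+r)=v *)
Definition cond_dens (F f : R -> R) (k r : nat) (u v t : R) : R :=
  INR (Factorial.fact (k + r - 1)) / (INR (Factorial.fact (k - 1)) * INR (Factorial.fact (r - 1))) *
  ((Rh F t - Rh F u) / (Rh F v - Rh F u)) ^ (k - 1) *
  ((Rh F v - Rh F t) / (Rh F v - Rh F u)) ^ (r - 1) *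
  (Rh' F f t / (Rh F v - Rh F u)).

(* E[X(n) | X(n-k)=u, X(n+r)=v] = e : the integral of t * density over (u,v)
   exists (Riemann) and equals e. *)
Definition cond_exp_eq (F f : R -> R) (k r : nat) (u v e : R) : Prop :=
  exists pr : Riemann_integrable (fun t => t * cond_dens F f k r u v t) u v,
    RiemannInt pr = e.

(* Main.v *)
Require Import Defs.
From Stdlib Require Import Reals Lra Lia Arith Factorial RList.
From Stdlib Require Import FunctionalExtensionality ClassicalEpsilon.
Open Scope R_scope.

Lemma D_ext : forall f g x l1 l2, (forall y, f y = g y) -> l1 = l2 ->
  derivable_pt_lim f x l1 -> derivable_pt_lim g x l2.
Proof. intros f g x l1 l2 H E D. replace g with f by (apply functional_extensionality; auto). subst; auto. Qed.

Lemma D_plus : forall f g x a b, derivable_pt_lim f x a -> derivable_pt_lim g x b ->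
  derivable_pt_lim (fun y => f y + g y) x (a+b).
Proof. intros. exact (derivable_pt_lim_plus f g x a b H H0). Qed.
Lemma D_minus : forall f g x a b, derivable_pt_lim f x a -> derivable_pt_lim g x b ->
  derivable_pt_lim (fun y => f y - g y) x (a-b).
Proof. intros. exact (derivable_pt_lim_minus f g x a b H H0). Qed.
Lemma D_mult : forall f g x a b, derivable_pt_lim f x a -> derivable_pt_lim g x b ->
  derivable_pt_lim (fun y => f y * g y) x (a * g x + f x * b).
Proof. intros. exact (derivable_pt_lim_mult f g x a b H H0). Qed.
Lemma D_const : forall c x, derivable_pt_lim (fun _ => c) x 0.
Proof. intros. exact (derivable_pt_lim_const c x). Qed.
Lemma D_id : forall x, derivable_pt_lim (fun y => y) x 1.
Proof. intros. exact (derivable_pt_lim_id x). Qed.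
Lemma D_comp : forall f g x a b, derivable_pt_lim f x a -> derivable_pt_lim g (f x) b ->
  derivable_pt_lim (fun y => g (f y)) x (b * a).
Proof. intros. exact (derivable_pt_lim_comp f g x a b H H0). Qed.
Lemma D_pow : forall f x a n, derivable_pt_lim f x a ->
  derivable_pt_lim (fun y => f y ^ n) x (INR n * f x ^ pred n * a).
Proof. intros. apply (D_comp f (fun z => z ^ n)); auto. apply derivable_pt_lim_pow. Qed.
Lemma D_scal : forall f x a c, derivable_pt_lim f x a ->
  derivable_pt_lim (fun y => c * f y) x (c * a).
Proof. intros. eapply D_ext. 3: apply (D_mult (fun _ => c) f x 0 a (D_const c x) H).
  intros; reflexivity. ring. Qed.

Lemma D_local : forall f g x l d, 0 < d -> (forall y, Rabs (y - x) < d -> f y = g y) ->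
  derivable_pt_lim f x l -> derivable_pt_lim g x l.
Proof.
  intros f g x l d Hd Hfg D eps Heps. destruct (D eps Heps) as [del Hdel].
  assert (Hm: 0 < Rmin del d) by (apply Rmin_pos; [apply cond_pos|lra]).
  exists (mkposreal _ Hm). intros h Hh0 Hh. simpl in Hh.
  rewrite <- (Hfg x), <- (Hfg (x+h)).
  - apply Hdel; auto. apply Rlt_le_trans with (1:=Hh), Rmin_l.
  - replace (x+h-x) with h by ring. apply Rlt_le_trans with (1:=Hh), Rmin_r.
  - replace (x-x) with 0 by ring. rewrite Rabs_R0; lra.
Qed.

Lemma Rabs_le_inv2 : forall x y, Rabs x <= y -> -y <= x <= y.
Proof. intros x y H. unfold Rabs in H. destruct (Rcase_abs x); lra. Qed.

Lemma sf_le : forall (g G phi : R -> R) l lf a b, a <= b ->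
  adapted_couple phi a b l lf ->
  (forall t, a <= t <= b -> g t <= phi t) ->
  (forall t, a <= t <= b -> derivable_pt_lim G t (g t)) ->
  G b - G a <= Int_SF lf l.
Proof.
  intros g G phi l. induction l as [|r1 l IH]; intros lf a b Hab Had Hg HG.
  - destruct Had as (_&_&_&Hl&_). simpl in Hl. discriminate.
  - destruct l as [|r2 l].
    + destruct Had as (_&H0&H1&Hl&_). simpl in H0, H1.
      rewrite Rmin_left in H0 by auto. rewrite Rmax_right in H1 by auto.
      destruct lf; simpl in Hl; [|discriminate]. simpl. subst. lra.
    + destruct lf as [|r3 lf]. { destruct Had as (_&_&_&Hl&_). simpl in Hl. discriminate. }
      assert (Had2 := StepFun_P7 Hab Had).
      destruct Had as (Hord&H0&H1&Hl&Hc). simpl in H0. rewrite Rmin_left in H0 by auto. subst r1.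
      assert (Hr2 : a <= r2 <= b).
      { split. apply (Hord 0%nat). simpl; lia.
        rewrite Rmax_right in H1 by auto. rewrite <- H1.
        apply RList_P7; auto. simpl. right. left. auto. }
      simpl.
      assert (IH2 := IH lf r2 b (proj2 Hr2) Had2
         (fun t Ht => Hg t (conj (Rle_trans _ _ _ (proj1 Hr2) (proj1 Ht)) (proj2 Ht)))
         (fun t Ht => HG t (conj (Rle_trans _ _ _ (proj1 Hr2) (proj1 Ht)) (proj2 Ht)))).
      assert (Hseg : G r2 - G a <= r3 * (r2 - a)).
      { destruct (Req_dec a r2) as [E|E]. { subst. lra. }
        destruct (MVT_cor2 G g a r2) as [c [Hc1 Hc2]]. lra.
        intros; apply HG; lra.
        rewrite Hc1. apply Rmult_le_compat_r. lra.
        rewrite <- (Hc 0%nat). apply Hg; lra. simpl; lia.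
        unfold open_interval; simpl; lra. }
      lra.
Qed.

Lemma sf_ge : forall (g G phi : R -> R) l lf a b, a <= b ->
  adapted_couple phi a b l lf ->
  (forall t, a <= t <= b -> phi t <= g t) ->
  (forall t, a <= t <= b -> derivable_pt_lim G t (g t)) ->
  Int_SF lf l <= G b - G a.
Proof.
  intros g G phi l. induction l as [|r1 l IH]; intros lf a b Hab Had Hg HG.
  - destruct Had as (_&_&_&Hl&_). simpl in Hl. discriminate.
  - destruct l as [|r2 l].
    + destruct Had as (_&H0&H1&Hl&_). simpl in H0, H1.
      rewrite Rmin_left in H0 by auto. rewrite Rmax_right in H1 by auto.
      destruct lf; simpl in Hl; [|discriminate]. simpl. subst. lra.
    + destruct lf as [|r3 lf]. { destruct Had as (_&_&_&Hl&_). simpl in Hl. discriminate. }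
      assert (Had2 := StepFun_P7 Hab Had).
      destruct Had as (Hord&H0&H1&Hl&Hc). simpl in H0. rewrite Rmin_left in H0 by auto. subst r1.
      assert (Hr2 : a <= r2 <= b).
      { split. apply (Hord 0%nat). simpl; lia.
        rewrite Rmax_right in H1 by auto. rewrite <- H1.
        apply RList_P7; auto. simpl. right. left. auto. }
      simpl.
      assert (IH2 := IH lf r2 b (proj2 Hr2) Had2
         (fun t Ht => Hg t (conj (Rle_trans _ _ _ (proj1 Hr2) (proj1 Ht)) (proj2 Ht)))
         (fun t Ht => HG t (conj (Rle_trans _ _ _ (proj1 Hr2) (proj1 Ht)) (proj2 Ht)))).
      assert (Hseg : r3 * (r2 - a) <= G r2 - G a).
      { destruct (Req_dec a r2) as [E|E]. { subst. lra. }
        destruct (MVT_cor2 G g a r2) as [c [Hc1 Hc2]]. lra.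
        intros; apply HG; lra.
        rewrite Hc1. apply Rmult_le_compat_r. lra.
        rewrite <- (Hc 0%nat). apply Hg; lra. simpl; lia.
        unfold open_interval; simpl; lra. }
      lra.
Qed.

Lemma FTC_gen : forall (g G : R -> R) a b (pr : Riemann_integrable g a b), a <= b ->
  (forall t, a <= t <= b -> derivable_pt_lim G t (g t)) ->
  RiemannInt pr = G b - G a.
Proof.
  intros g G a b pr Hab HG.
  assert (Key : forall (phi psi : StepFun a b),
     (forall t, Rmin a b <= t <= Rmax a b -> Rabs (g t - phi t) <= psi t) ->
     Rabs (G b - G a - RiemannInt_SF phi) <= RiemannInt_SF psi).
  { intros phi psi H.
    rewrite Rmin_left in H by auto. rewrite Rmax_right in H by auto.
    set (p1 := mkStepFun (StepFun_P28 1 phi psi)).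
    set (p2 := mkStepFun (StepFun_P28 (-1) phi psi)).
    assert (E1 := StepFun_P30 1 phi psi). assert (E2 := StepFun_P30 (-1) phi psi).
    fold p1 in E1. fold p2 in E2.
    assert (L1 : G b - G a <= RiemannInt_SF p1).
    { unfold RiemannInt_SF at 1. destruct (Rle_dec a b); [|lra].
      apply (sf_le g G p1 _ _ a b Hab (StepFun_P1 p1)); auto.
      intros t Ht. simpl. specialize (H t Ht). apply Rabs_le_inv2 in H. lra. }
    assert (L2 : RiemannInt_SF p2 <= G b - G a).
    { unfold RiemannInt_SF at 1. destruct (Rle_dec a b); [|lra].
      apply (sf_ge g G p2 _ _ a b Hab (StepFun_P1 p2)); auto.
      intros t Ht. simpl. specialize (H t Ht). apply Rabs_le_inv2 in H. lra. }
    apply Rabs_le. lra. }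
  unfold RiemannInt. destruct (RiemannInt_exists pr RinvN RinvN_cv) as [x Hx].
  apply (UL_sequence _ _ _ Hx).
  intros eps Heps. pose proof RinvN_cv as Hcv. destruct (Hcv eps Heps) as [N HN].
  exists N. intros n Hn. specialize (HN n Hn).
  destruct (phi_sequence_prop RinvN pr n) as [psi [Hp1 Hp2]].
  specialize (Key _ _ Hp1). unfold R_dist, Rdist in *.
  rewrite Rminus_0_r in HN. rewrite Rabs_right in HN by (left; apply cond_pos).
  rewrite Rabs_minus_sym. apply Rle_lt_trans with (1:=Key).
  apply Rle_lt_trans with (1:=Rle_abs _). lra.
Qed.


Fixpoint Psi (b a : nat) (x y : R) : R :=
  match b with
  | O => x ^ (S a) / INR (S a)
  | S b' => (x ^ (S a) * (y - x) ^ (S b') + INR (S b') * Psi b' (S a) x y) / INR (S a)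
  end.

Definition Ed (b a : nat) (x y : R) : R :=
  match b with
  | O => x ^ a
  | S b' => x ^ a * (y - x) ^ (S b') + INR (S b') * Psi b' a x y
  end.

Lemma INR_S_pos : forall n, 0 < INR (S n).
Proof. intros. apply lt_0_INR. lia. Qed.
Lemma INR_S_neq : forall n, INR (S n) <> 0.
Proof. intros. apply Rgt_not_eq, INR_S_pos. Qed.

Lemma Psi_dx : forall b a y x, derivable_pt_lim (fun z => Psi b a z y) x (x ^ a * (y - x) ^ b).
Proof.
  induction b as [|b IH]; intros a y x; cbn [Psi].
  - eapply D_ext; [| | exact (D_scal _ x _ (/ INR (S a)) (D_pow (fun z => z) x 1 (S a) (D_id x)))].
    intros; cbv beta; unfold Rdiv; ring.
    cbv beta; cbn [pred pow]. assert (H:=INR_S_neq a). field; auto.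
  - eapply D_ext; [| | exact (D_scal _ x _ (/ INR (S a))
      (D_plus _ _ _ _ _ (D_mult _ _ _ _ _ (D_pow (fun z => z) x 1 (S a) (D_id x)) (D_pow (fun z => y - z) x (0-1) (S b) (D_minus _ _ _ _ _ (D_const y x) (D_id x)))) (D_scal _ x _ (INR (S b)) (IH (S a) y x))))].
    intros; cbv beta; unfold Rdiv; ring.
    cbv beta; cbn [pred pow]. assert (H:=INR_S_neq a). rewrite S_INR. field; rewrite <- S_INR; auto.
Qed.

Lemma Psi_0 : forall b a y, Psi b a 0 y = 0.
Proof. induction b; intros; cbn [Psi]. simpl; field; apply INR_S_neq.
  rewrite IHb. simpl. field. apply INR_S_neq. Qed.

Lemma Psi_diag : forall b a y, Psi b a y y =
  INR (fact a) * INR (fact b) / INR (fact (a + b + 1)) * y ^ (a + b + 1).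
Proof.
  induction b as [|b IH]; intros a y; cbn [Psi].
  - rewrite Nat.add_0_r, Nat.add_1_r. change (fact (S a)) with (S a * fact a)%nat. rewrite mult_INR. change (fact 0) with 1%nat.
    simpl (INR 1). assert (Hf := INR_fact_neq_0 a). assert (H:=INR_S_neq a). field; auto.
  - rewrite IH. replace (S a + b + 1)%nat with (a + S b + 1)%nat by lia.
    replace (y - y) with 0 by ring. rewrite pow_i by lia.
    change (fact (S a)) with (S a * fact a)%nat. change (fact (S b)) with (S b * fact b)%nat.
    rewrite !mult_INR. assert (Hf := INR_fact_neq_0 (a + S b + 1)). assert (H:=INR_S_neq a). field; auto.
Qed.

Lemma Ed_S : forall b a x y, Ed b (S a) x y = INR (S a) * Psi b a x y.
Proof. intros [|b] a x y; cbn [Ed]; cbn [Psi].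
  - simpl pow. field. apply INR_S_neq.
  - field. apply INR_S_neq. Qed.

Lemma Psi_dD : forall b a x y s0,
  derivable_pt_lim (fun s => Psi b a (x + s) (y + s)) s0 (Ed b a (x + s0) (y + s0)).
Proof.
  induction b as [|b IH]; intros a x y s0; cbn [Psi].
  - eapply D_ext; [| | exact (D_scal _ s0 _ (/ INR (S a)) (D_pow (fun s => x+s) s0 (0+1) (S a) (D_plus _ _ _ _ _ (D_const x s0) (D_id s0))))].
    intros; cbv beta; unfold Rdiv; ring.
    cbv beta; cbn [pred pow]. cbn [Ed]. assert (H:=INR_S_neq a). field; auto.
  - eapply D_ext; [| | exact (D_scal _ s0 _ (/ INR (S a))
      (D_plus _ _ _ _ _ (D_mult _ _ _ _ _ (D_pow (fun s => x+s) s0 (0+1) (S a) (D_plus _ _ _ _ _ (D_const x s0) (D_id s0))) (D_const ((y-x)^(S b)) s0)) (D_scal _ s0 _ (INR (S b)) (IH (S a) x y s0))))].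
    intros; unfold Rdiv. replace (y + y0 - (x + y0)) with (y - x) by ring. ring.
    cbv beta; cbn [pred pow]. rewrite Ed_S. cbn [Ed]. replace (y + s0 - (x + s0)) with (y - x) by ring.
    assert (H:=INR_S_neq a). cbn [pow]. field; auto.
Qed.

Definition Bnd (B : R) (f : R -> R -> R) :=
  exists C, forall x y, Rabs x <= B -> Rabs y <= B -> Rabs (f x y) <= C.

Lemma bnd_ext : forall B f g, (forall x y, f x y = g x y) -> Bnd B f -> Bnd B g.
Proof. intros B f g E [C H]. exists C. intros. rewrite <- E. auto. Qed.
Lemma bnd_const : forall B c, Bnd B (fun _ _ => c).
Proof. intros. exists (Rabs c). intros; lra. Qed.
Lemma bnd_x : forall B, Bnd B (fun x _ => x).
Proof. intros. exists B. intros; auto. Qed.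
Lemma bnd_y : forall B, Bnd B (fun _ y => y).
Proof. intros. exists B. intros; auto. Qed.
Lemma bnd_plus : forall B f g, Bnd B f -> Bnd B g -> Bnd B (fun x y => f x y + g x y).
Proof. intros B f g [C1 H1] [C2 H2]. exists (C1 + C2). intros.
  eapply Rle_trans. apply Rabs_triang. specialize (H1 x y H H0). specialize (H2 x y H H0). lra. Qed.
Lemma bnd_opp : forall B f, Bnd B f -> Bnd B (fun x y => - f x y).
Proof. intros B f [C1 H1]. exists C1. intros. rewrite Rabs_Ropp. auto. Qed.
Lemma bnd_mult : forall B f g, Bnd B f -> Bnd B g -> Bnd B (fun x y => f x y * g x y).
Proof. intros B f g [C1 H1] [C2 H2]. exists (Rabs C1 * Rabs C2). intros.
  rewrite Rabs_mult. specialize (H1 x y H H0). specialize (H2 x y H H0).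
  apply Rmult_le_compat; try apply Rabs_pos.
  apply Rle_trans with (1:=H1), RRle_abs. apply Rle_trans with (1:=H2), RRle_abs. Qed.
Lemma bnd_minus : forall B f g, Bnd B f -> Bnd B g -> Bnd B (fun x y => f x y - g x y).
Proof. intros. apply bnd_plus; auto. apply bnd_opp; auto. Qed.
Lemma bnd_pow : forall B f n, Bnd B f -> Bnd B (fun x y => f x y ^ n).
Proof. intros B f n H. induction n.
  - apply (bnd_ext B (fun _ _ => 1)). intros; simpl; auto. apply bnd_const.
  - apply (bnd_mult B f (fun x y => f x y ^ n)); auto. Qed.

Lemma Psi_bnd : forall B b a, Bnd B (fun x y => Psi b a x y).
Proof.
  intros B b. induction b as [|b IH]; intros a; cbn [Psi]; unfold Rdiv.
  - apply bnd_mult. apply bnd_pow, bnd_x. apply bnd_const.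
  - apply bnd_mult; [|apply bnd_const]. apply bnd_plus.
    apply bnd_mult; apply bnd_pow; [apply bnd_x| apply bnd_minus; [apply bnd_y|apply bnd_x]].
    apply bnd_mult; [apply bnd_const| apply IH].
Qed.

Lemma Ed_bnd : forall B b a, Bnd B (fun x y => Ed b a x y).
Proof.
  intros B [|b] a; cbn [Ed].
  - apply bnd_pow, bnd_x.
  - apply bnd_plus. apply bnd_mult; apply bnd_pow; [apply bnd_x| apply bnd_minus; [apply bnd_y|apply bnd_x]].
    apply bnd_mult; [apply bnd_const| apply Psi_bnd].
Qed.

Lemma Rabs_le_plus1 : forall x s B, Rabs x <= B -> Rabs s <= 1 -> Rabs (x + s) <= B + 1.
Proof. intros. eapply Rle_trans. apply Rabs_triang. lra. Qed.

Lemma Psi_lipD : forall B b a, exists L, 0 <= L /\ forall x y s,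
  Rabs x <= B -> Rabs y <= B -> Rabs s <= 1 ->
  Rabs (Psi b a (x + s) (y + s) - Psi b a x y) <= L * Rabs s.
Proof.
  intros B b a. destruct (Ed_bnd (B+1) b a) as [C HC].
  exists (Rabs C). split. apply Rabs_pos. intros x y s Hx Hy Hs.
  destruct (MVT_abs (fun s => Psi b a (x + s) (y + s)) (fun s => Ed b a (x+s) (y+s)) 0 s) as [c [Hc1 Hc2]].
  { intros; apply Psi_dD. }
  cbv beta in Hc1. rewrite !Rplus_0_r in Hc1. rewrite Hc1. rewrite Rminus_0_r.
  apply Rmult_le_compat_r. apply Rabs_pos.
  assert (Rabs c <= 1).
  { unfold Rmin, Rmax in Hc2. destruct (Rle_dec 0 s); apply Rabs_le; apply Rabs_le_inv2 in Hs; lra. }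
  apply Rle_trans with C. apply HC; apply Rabs_le_plus1; auto. apply RRle_abs.
Qed.

Lemma Psi_linx : forall B b a, exists L, 0 <= L /\ forall x y,
  Rabs x <= B -> Rabs y <= B -> Rabs (Psi b a x y) <= L * Rabs x.
Proof.
  intros B b a.
  assert (Hb : Bnd B (fun x y => x ^ a * (y - x) ^ b)).
  { apply bnd_mult; apply bnd_pow; [apply bnd_x| apply bnd_minus; [apply bnd_y|apply bnd_x]]. }
  destruct Hb as [C HC].
  exists (Rabs C). split. apply Rabs_pos. intros x y Hx Hy.
  destruct (MVT_abs (fun z => Psi b a z y) (fun z => z ^ a * (y - z) ^ b) 0 x) as [c [Hc1 Hc2]].
  { intros; apply Psi_dx. }
  cbv beta in Hc1. rewrite Psi_0, Rminus_0_r, Rminus_0_r in Hc1. rewrite Hc1.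
  apply Rmult_le_compat_r. apply Rabs_pos.
  assert (Rabs c <= B).
  { unfold Rmin, Rmax in Hc2. destruct (Rle_dec 0 x); apply Rabs_le; apply Rabs_le_inv2 in Hx; lra. }
  apply Rle_trans with C. apply HC; auto. apply RRle_abs.
Qed.

Lemma Psi_remD : forall B b a, exists L, 0 <= L /\ forall x y s,
  Rabs x <= B -> Rabs y <= B -> Rabs s <= 1 ->
  Rabs (Psi b (S a) (x + s) (y + s) - Psi b (S a) x y - s * Ed b (S a) x y) <= L * (s * s).
Proof.
  intros B b a. destruct (Psi_lipD B b a) as [L [HL0 HL]].
  exists (INR (S a) * L). split. apply Rmult_le_pos; auto. left; apply INR_S_pos.
  intros x y s Hx Hy Hs.
  destruct (MVT_abs (fun s => Psi b (S a) (x + s) (y + s) - s * Ed b (S a) x y)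
     (fun s => Ed b (S a) (x+s) (y+s) - Ed b (S a) x y) 0 s) as [c [Hc1 Hc2]].
  { intros. eapply D_ext; [| |exact (D_minus _ _ _ _ _ (Psi_dD b (S a) x y c) (D_scal _ c _ (Ed b (S a) x y) (D_id c)))].
    intros; cbv beta; ring. ring. }
  cbv beta in Hc1. rewrite !Rplus_0_r, Rmult_0_l, Rminus_0_r, Rminus_0_r in Hc1.
  replace (Psi b (S a) (x + s) (y + s) - Psi b (S a) x y - s * Ed b (S a) x y) with
     (Psi b (S a) (x + s) (y + s) - s * Ed b (S a) x y - Psi b (S a) x y) by ring.
  rewrite Hc1. rewrite !Ed_S.
  replace (INR (S a) * Psi b a (x + c) (y + c) - INR (S a) * Psi b a x y) with
     (INR (S a) * (Psi b a (x + c) (y + c) - Psi b a x y)) by ring.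
  rewrite Rabs_mult, Rabs_right by (left; apply INR_S_pos).
  assert (Rabs c <= Rabs s).
  { unfold Rmin, Rmax in Hc2. destruct (Rle_dec 0 s); unfold Rabs; destruct (Rcase_abs c), (Rcase_abs s); lra. }
  assert (Rabs c <= 1) by lra.
  specialize (HL x y c Hx Hy H0).
  replace (s * s) with (Rabs s * Rabs s) by (rewrite <- Rabs_mult; apply Rabs_right; nra).
  assert (0 < INR (S a)) by apply INR_S_pos.
  assert (0 <= Rabs s) by apply Rabs_pos.
  assert (Hq : Rabs (Psi b a (x + c) (y + c) - Psi b a x y) <= L * Rabs s) by (apply Rle_trans with (1:=HL); apply Rmult_le_compat_l; auto).
  replace (INR (S a) * L * (Rabs s * Rabs s)) with (INR (S a) * (L * Rabs s) * Rabs s) by ring.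
  apply Rmult_le_compat_r; auto. apply Rmult_le_compat_l; lra.
Qed.

Definition RI (f : R -> R) (a b : R) : R :=
  match excluded_middle_informative (exists p : Riemann_integrable f a b, True) with
  | left H => RiemannInt (proj1_sig (constructive_indefinite_description _ H))
  | right _ => 0
  end.

Lemma RI_eq : forall f a b (pr : Riemann_integrable f a b), RI f a b = RiemannInt pr.
Proof.
  intros. unfold RI. destruct excluded_middle_informative as [H|H].
  - apply RiemannInt_P5.
  - exfalso. apply H. exists pr. auto.
Qed.

Lemma RI_lin : forall f g l a b, Riemann_integrable f a b -> Riemann_integrable g a b ->
  RI (fun t => f t + l * g t) a b = RI f a b + l * RI g a b.
Proof.
  intros f g l a b p1 p2. rewrite (RI_eq _ _ _ p1), (RI_eq _ _ _ p2), (RI_eq _ _ _ (RiemannInt_P10 l p1 p2)).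
  apply RiemannInt_P13.
Qed.

Lemma RI_chasles : forall f a b c, Riemann_integrable f a b -> Riemann_integrable f b c ->
  RI f a c = RI f a b + RI f b c.
Proof.
  intros f a b c p1 p2. rewrite (RI_eq _ _ _ p1), (RI_eq _ _ _ p2), (RI_eq _ _ _ (RiemannInt_P24 p1 p2)).
  symmetry; apply RiemannInt_P26.
Qed.

Lemma RI_ext : forall f g a b, a <= b -> (forall t, a <= t <= b -> f t = g t) ->
  Riemann_integrable f a b -> RI f a b = RI g a b.
Proof.
  intros f g a b Hab E p.
  assert (p2 : Riemann_integrable g a b).
  { refine (@Riemann_integrable_ext f g a b _ p). intros x Hx. rewrite Rmin_left, Rmax_right in Hx by auto. auto. }
  rewrite (RI_eq _ _ _ p), (RI_eq _ _ _ p2). apply RiemannInt_P18; auto.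
  intros; apply E; lra.
Qed.

Lemma RI_bound : forall f a b M, Riemann_integrable f a b ->
  (forall t, Rmin a b <= t <= Rmax a b -> Rabs (f t) <= M) ->
  Rabs (RI f a b) <= M * Rabs (b - a).
Proof.
  intros f a b M p H. destruct (Rle_dec a b) as [Hab|Hab].
  - rewrite (RI_eq _ _ _ p). rewrite Rmin_left, Rmax_right in H by auto.
    destruct (@RiemannInt_const_bound f a b (-M) M p Hab) as [H1 H2].
    { intros x Hx. apply Rabs_le_inv2. apply H; lra. }
    rewrite (Rabs_right (b - a)) by lra. apply Rabs_le; lra.
  - assert (Hba : b <= a) by lra. pose proof (RiemannInt_P1 p) as p'.
    rewrite (RI_eq _ _ _ p). rewrite (RiemannInt_P8 p p'). rewrite Rabs_Ropp.
    rewrite Rmin_right, Rmax_left in H by auto.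
    destruct (@RiemannInt_const_bound f b a (-M) M p' Hba) as [H1 H2].
    { intros x Hx. apply Rabs_le_inv2. apply H; lra. }
    rewrite (Rabs_left (b - a)) by lra. apply Rabs_le; lra.
Qed.

Lemma RI_zero : forall f a b, a <= b -> (forall t, a <= t <= b -> f t = 0) -> RI f a b = 0.
Proof.
  intros f a b Hab H.
  assert (p : Riemann_integrable f a b).
  { refine (@Riemann_integrable_ext (fct_cte 0) f a b _ (RiemannInt_P14 a b 0)). intros x Hx. rewrite Rmin_left, Rmax_right in Hx by auto.
    rewrite H; auto. }
  assert (Hb := RI_bound f a b 0 p). rewrite Rmult_0_l in Hb.
  assert (Rabs (RI f a b) <= 0). apply Hb. intros t Ht. rewrite Rmin_left, Rmax_right in Ht by auto.
  rewrite H; auto. rewrite Rabs_R0; lra.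
  pose proof (Rabs_pos (RI f a b)). destruct (Req_dec (RI f a b) 0); auto.
  pose proof (Rabs_pos_lt _ H2). lra.
Qed.

Lemma deriv_bound : forall (Phi D : R -> R) u L rho J K d0, 0 < d0 -> 0 <= K ->
  derivable_pt_lim D u rho ->
  (forall h, h <> 0 -> Rabs h < d0 ->
     Rabs ((Phi (u + h) - Phi u) / h - L) <=
       Rabs ((D (u + h) - D u) / h - rho) * Rabs J + K * Rabs (D (u + h) - D u) * (1 + Rabs ((D (u + h) - D u) / h))) ->
  derivable_pt_lim Phi u L.
Proof.
  intros Phi D u L rho J K d0 Hd0 HK HD Hb eps Heps.
  set (e1 := Rmin 1 (eps / (2 * (Rabs J + 1)))).
  assert (He1 : 0 < e1). { unfold e1. apply Rmin_pos. lra. apply Rdiv_lt_0_compat. lra. pose proof (Rabs_pos J). lra. }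
  destruct (HD e1 He1) as [d1 Hd1].
  assert (Hc : continuity_pt D u). { apply derivable_continuous_pt. exists rho. auto. }
  set (e2 := eps / (2 * (K * (Rabs rho + 2) + 1))).
  assert (He2 : 0 < e2). { unfold e2. apply Rdiv_lt_0_compat. lra. pose proof (Rabs_pos rho). nra. }
  destruct (Hc e2 He2) as [d2 [Hd2 Hd2']].
  assert (Hd : 0 < Rmin d0 (Rmin d1 d2)). { repeat apply Rmin_pos; auto. apply cond_pos. }
  exists (mkposreal _ Hd). intros h Hh0 Hh. simpl in Hh.
  assert (Hh1 : Rabs h < d0) by (eapply Rlt_le_trans; [exact Hh| apply Rmin_l]).
  assert (Hh2 : Rabs h < d1) by (eapply Rlt_le_trans; [exact Hh| eapply Rle_trans; [apply Rmin_r| apply Rmin_l]]).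
  assert (Hh3 : Rabs h < d2) by (eapply Rlt_le_trans; [exact Hh| eapply Rle_trans; [apply Rmin_r| apply Rmin_r]]).
  specialize (Hb h Hh0 Hh1). specialize (Hd1 h Hh0 Hh2).
  assert (Hdd : Rabs (D (u + h) - D u) < e2).
  { destruct (Req_dec (D (u+h)) (D u)) as [E|E]. rewrite E, Rminus_eq_0, Rabs_R0; auto.
    apply (Hd2' (u+h)). split. split. exact I. intro; apply Hh0; lra.
    simpl. unfold Rdist. replace (u + h - u) with h by ring. auto. }
  set (q := (D (u + h) - D u) / h) in *.
  assert (Hq : Rabs q <= Rabs rho + 1).
  { assert (Rabs q <= Rabs (q - rho) + Rabs rho). { replace q with ((q - rho) + rho) at 1 by ring. apply Rabs_triang. }
    assert (e1 <= 1) by apply Rmin_l. lra. }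
  assert (T1 : Rabs (q - rho) * Rabs J <= eps / 2).
  { assert (e1 <= eps / (2 * (Rabs J + 1))) by apply Rmin_r.
    assert (0 <= Rabs J) by apply Rabs_pos.
    assert (Rabs (q - rho) * Rabs J <= e1 * (Rabs J + 1)) by nra.
    assert (eps / (2 * (Rabs J + 1)) * (Rabs J + 1) = eps / 2) by (field; lra).
    nra. }
  assert (T2 : K * Rabs (D (u + h) - D u) * (1 + Rabs q) < eps / 2).
  { assert (0 <= Rabs (D (u + h) - D u)) by apply Rabs_pos.
    assert (K * Rabs (D (u + h) - D u) * (1 + Rabs q) <= e2 * (K * (Rabs rho + 2))).
    { assert (0 <= Rabs q) by apply Rabs_pos. pose proof (Rabs_pos rho).
      assert (K * (1 + Rabs q) <= K * (Rabs rho + 2)) by nra.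
      replace (K * Rabs (D (u + h) - D u) * (1 + Rabs q)) with (Rabs (D (u + h) - D u) * (K * (1 + Rabs q))) by ring.
      apply Rle_trans with (Rabs (D (u + h) - D u) * (K * (Rabs rho + 2))).
      apply Rmult_le_compat_l; auto. apply Rmult_le_compat_r. nra. lra. }
    assert (e2 * (K * (Rabs rho + 2)) < eps / 2).
    { unfold e2. pose proof (Rabs_pos rho).
      assert (0 <= K * (Rabs rho + 2)) by nra.
      apply Rlt_le_trans with (eps / (2 * (K * (Rabs rho + 2) + 1)) * (K * (Rabs rho + 2) + 1)).
      apply Rmult_lt_compat_l. apply Rdiv_lt_0_compat; nra. lra.
      right. field. lra. }
    lra. }
  lra.
Qed.

Lemma RI_scal : forall g l a b, Riemann_integrable g a b -> RI (fun t => l * g t) a b = l * RI g a b.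
Proof.
  intros g l a b p.
  replace (fun t => l * g t) with (fun t => fct_cte 0 t + l * g t)
    by (apply functional_extensionality; intros; unfold fct_cte; ring).
  rewrite RI_lin; auto. rewrite (RI_eq _ _ _ (RiemannInt_P14 a b 0)), RiemannInt_P15. ring.
  apply RiemannInt_P14.
Qed.

Lemma cont_Psi : forall b a y k, continuity (fun x => Psi b a (x - k) y).
Proof.
  intros b a y k x. apply derivable_continuous_pt.
  exists (1 * ((x - k) ^ a * (y - (x - k)) ^ b)).
  assert (H1 : derivable_pt_lim (fun x => x - k) x 1).
  { eapply D_ext; [| |exact (D_minus _ _ x _ _ (D_id x) (D_const k x))]; intros; cbv beta; ring. }
  eapply D_ext; [| | exact (D_comp (fun x => x - k) (fun z => Psi b a z y) x 1 _ H1 (Psi_dx b a y (x - k)))].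
  intros; reflexivity. ring.
Qed.

Lemma cont_Ed : forall b a y k, continuity (fun x => Ed b (S a) (x - k) y).
Proof.
  intros b a y k x.
  replace (fun x => Ed b (S a) (x - k) y) with (fun x => INR (S a) * Psi b a (x - k) y).
  exact (continuity_pt_scal (fun x => Psi b a (x - k) y) (INR (S a)) x (cont_Psi b a y k x)).
  apply functional_extensionality; intros; rewrite Ed_S; auto.
Qed.

Lemma integ_comp : forall (G Rf : R -> R) lo hi a1 b1, continuity G ->
  (forall t, lo <= t <= hi -> continuity_pt Rf t) ->
  lo <= Rmin a1 b1 -> Rmax a1 b1 <= hi -> Riemann_integrable (fun t => G (Rf t)) a1 b1.
Proof.
  intros G Rf lo hi a1 b1 HG HR H1 H2.
  assert (Hc : forall x, Rmin a1 b1 <= x <= Rmax a1 b1 -> continuity_pt (fun t => G (Rf t)) x).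
  { intros x Hx. exact (continuity_pt_comp Rf G x (HR x ltac:(lra)) (HG _)). }
  destruct (Rle_dec a1 b1) as [H|H].
  - rewrite Rmin_left, Rmax_right in * by auto. apply continuity_implies_RiemannInt; auto.
  - rewrite Rmin_right, Rmax_left in * by lra. apply RiemannInt_P1.
    apply continuity_implies_RiemannInt; auto. lra.
Qed.

Lemma leibniz : forall (Rf : R -> R) (b a : nat) u v d0 rho,
  0 < d0 -> u < v ->
  (forall t, u - d0 <= t <= v -> continuity_pt Rf t) ->
  (forall t1 t2, u - d0 <= t1 -> t1 <= t2 -> t2 <= v -> Rf t1 <= Rf t2) ->
  derivable_pt_lim Rf u rho ->
  derivable_pt_lim (fun c => RI (fun t => Psi b (S a) (Rf t - Rf c) (Rf v - Rf c)) c v) u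
     (- rho * RI (fun t => Ed b (S a) (Rf t - Rf u) (Rf v - Rf u)) u v).
Proof.
  intros Rf b a u v d0 rho Hd0 Huv HRc HRm HRd.
  set (Y := Rf v - Rf u).
  assert (HY : 0 <= Y) by (unfold Y; pose proof (HRm u v); lra).
  set (B := Y + 2).
  destruct (Psi_linx B b (S a)) as [Lx [HLx0 HLx]].
  destruct (Psi_remD B b a) as [L2 [HL20 HL2]].
  assert (Hc : continuity_pt Rf u). { apply derivable_continuous_pt. exists rho. auto. }
  destruct (Hc 1 Rlt_0_1) as [d1 [Hd1 Hd1']].
  set (J := RI (fun t => Ed b (S a) (Rf t - Rf u) Y) u v).
  assert (Hpos : 0 < Rmin d0 (Rmin (v - u) d1)) by (repeat apply Rmin_pos; lra).
  apply (deriv_bound _ Rf u _ rho J (Lx + L2 * (v - u)) _ Hpos); [nra| auto |].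
  intros h Hh0 Hh. cbv beta.
  assert (Hh1 : Rabs h < d0) by (eapply Rlt_le_trans; [exact Hh| apply Rmin_l]).
  assert (Hh2 : Rabs h < v - u) by (eapply Rlt_le_trans; [exact Hh| eapply Rle_trans; [apply Rmin_r| apply Rmin_l]]).
  assert (Hh3 : Rabs h < d1) by (eapply Rlt_le_trans; [exact Hh| eapply Rle_trans; [apply Rmin_r| apply Rmin_r]]).
  assert (Hh1s : -d0 < h < d0) by (unfold Rabs in Hh1; destruct (Rcase_abs h); lra).
  assert (Hh2s : -(v-u) < h < v - u) by (unfold Rabs in Hh2; destruct (Rcase_abs h); lra).
  set (dl := Rf (u + h) - Rf u).
  assert (Hdl : Rabs dl <= 1).
  { unfold dl. destruct (Req_dec (Rf (u+h)) (Rf u)) as [E|E]. rewrite E, Rminus_diag, Rabs_R0; lra.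
    left. apply (Hd1' (u+h)). split. split. exact I. intro; apply Hh0; lra.
    simpl. unfold Rdist. replace (u + h - u) with h by ring. auto. }
  assert (Hint : forall c a1 b1, u - d0 <= Rmin a1 b1 -> Rmax a1 b1 <= v ->
     Riemann_integrable (fun t => Psi b (S a) (Rf t - Rf c) (Rf v - Rf c)) a1 b1).
  { intros c a1 b1 H1 H2. exact (integ_comp (fun x => Psi b (S a) (x - Rf c) (Rf v - Rf c)) Rf (u - d0) v a1 b1 (cont_Psi _ _ _ _) HRc H1 H2). }
  assert (HintE : Riemann_integrable (fun t => Ed b (S a) (Rf t - Rf u) Y) u v).
  { exact (integ_comp (fun x => Ed b (S a) (x - Rf u) Y) Rf (u - d0) v u v (cont_Ed _ _ _ _) HRc
       ltac:(rewrite Rmin_left; lra) ltac:(rewrite Rmax_right; lra)). }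
  assert (Huv1 : u - d0 <= Rmin u v) by (rewrite Rmin_left; lra).
  assert (Huv2 : Rmax u v <= v) by (rewrite Rmax_right; lra).
  assert (Hhu1 : u - d0 <= Rmin (u + h) u) by (unfold Rmin; destruct Rle_dec; lra).
  assert (Hhu2 : Rmax (u + h) u <= v) by (unfold Rmax; destruct Rle_dec; lra).
  set (g1 := fun t => Psi b (S a) (Rf t - Rf (u + h)) (Rf v - Rf (u + h))).
  set (g0 := fun t => Psi b (S a) (Rf t - Rf u) (Rf v - Rf u)).
  set (E := fun t => Ed b (S a) (Rf t - Rf u) Y).
  set (rem := fun t => (g1 t + (-1) * g0 t) + dl * E t).
  assert (p1 : Riemann_integrable g1 u v) by (apply Hint; auto).
  assert (p0 : Riemann_integrable g0 u v) by (apply Hint; auto).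
  assert (prem : Riemann_integrable rem u v) by (apply RiemannInt_P10; [apply RiemannInt_P10|]; auto).
  assert (Hsplit : RI g1 (u + h) v = RI g1 (u + h) u + RI g1 u v).
  { apply RI_chasles. apply Hint; auto. apply Hint; auto. }
  assert (Hlin : RI g1 u v = RI g0 u v + (- dl) * J + RI rem u v).
  { rewrite (RI_ext g1 (fun t => (g0 t + (- dl) * E t) + 1 * rem t) u v) by (try lra; try (intros; unfold rem; ring); auto).
    rewrite RI_lin by (auto; apply RiemannInt_P10; auto).
    rewrite RI_lin by auto. replace (RI E u v) with J by reflexivity. ring. }
  change (RI (fun t => Psi b (S a) (Rf t - Rf (u + h)) (Rf v - Rf (u + h))) (u + h) v) with (RI g1 (u + h) v).
  change (RI (fun t => Psi b (S a) (Rf t - Rf u) (Rf v - Rf u)) u v) with (RI g0 u v).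
  rewrite Hsplit, Hlin.
  set (T1 := RI g1 (u + h) u). set (T2 := RI rem u v).
  assert (HT1 : Rabs T1 <= Lx * Rabs dl * Rabs h).
  { replace (Rabs h) with (Rabs (u - (u + h))) by (replace (u - (u+h)) with (-h) by ring; apply Rabs_Ropp).
    apply RI_bound. apply Hint; auto.
    intros t Ht. unfold g1.
    assert (Hb1 : Rabs (Rf t - Rf (u + h)) <= Rabs dl).
    { unfold dl, Rmin, Rmax in *. destruct (Rle_dec (u + h) u).
      - pose proof (HRm (u+h) t ltac:(lra) ltac:(lra) ltac:(lra)). pose proof (HRm t u ltac:(lra) ltac:(lra) ltac:(lra)).
        unfold Rabs; destruct (Rcase_abs (Rf t - Rf (u + h))), (Rcase_abs (Rf (u + h) - Rf u)); lra.
      - pose proof (HRm u t ltac:(lra) ltac:(lra) ltac:(lra)). pose proof (HRm t (u+h) ltac:(lra) ltac:(lra) ltac:(lra)).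
        unfold Rabs; destruct (Rcase_abs (Rf t - Rf (u + h))), (Rcase_abs (Rf (u + h) - Rf u)); lra. }
    eapply Rle_trans. apply HLx.
    + unfold B; lra.
    + replace (Rf v - Rf (u + h)) with (Y - dl) by (unfold Y, dl; ring).
      eapply Rle_trans. apply Rabs_triang. rewrite Rabs_Ropp, (Rabs_right Y) by lra. unfold B; lra.
    + apply Rmult_le_compat_l; auto. }
  assert (HT2 : Rabs T2 <= L2 * (dl * dl) * Rabs (v - u)).
  { apply RI_bound; auto. intros t Ht. rewrite Rmin_left, Rmax_right in Ht by lra.
    unfold rem, g1, g0, E.
    pose proof (HRm u t ltac:(lra) ltac:(lra) ltac:(lra)). pose proof (HRm t v ltac:(lra) ltac:(lra) ltac:(lra)).
    replace (Rf t - Rf (u + h)) with ((Rf t - Rf u) + - dl) by (unfold dl; ring).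
    replace (Rf v - Rf (u + h)) with (Y + - dl) by (unfold Y, dl; ring).
    fold Y.
    replace (Psi b (S a) (Rf t - Rf u + - dl) (Y + - dl) + -1 * Psi b (S a) (Rf t - Rf u) Y + dl * Ed b (S a) (Rf t - Rf u) Y)
      with (Psi b (S a) (Rf t - Rf u + - dl) (Y + - dl) - Psi b (S a) (Rf t - Rf u) Y - (- dl) * Ed b (S a) (Rf t - Rf u) Y) by ring.
    replace (dl * dl) with (- dl * - dl) by ring.
    apply HL2.
    + rewrite Rabs_right by lra. unfold B, Y in *; lra.
    + rewrite Rabs_right by lra. unfold B; lra.
    + rewrite Rabs_Ropp; auto. }
  rewrite (Rabs_right (v - u)) in HT2 by lra.
  assert (Hab : Rabs h > 0) by (apply Rabs_pos_lt; auto).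
  replace ((RI g1 (u + h) u + (RI g0 u v + - dl * J + RI rem u v) - RI g0 u v) / h - - rho * J)
    with (T1 / h + T2 / h - (dl / h - rho) * J) by (fold T1 T2; field; auto).
  replace (Rf (u + h) - Rf u) with dl by reflexivity.
  set (q := dl / h).
  assert (Eq1 : Rabs (T1 / h) <= Lx * Rabs dl).
  { unfold Rdiv. rewrite Rabs_mult, Rabs_inv. apply (Rmult_le_reg_r (Rabs h)); auto.
    rewrite Rmult_assoc, Rinv_l by lra. lra. }
  assert (Eq2 : Rabs (T2 / h) <= L2 * (v - u) * Rabs dl * Rabs q).
  { unfold q, Rdiv. rewrite Rabs_mult, Rabs_inv, (Rabs_mult dl), Rabs_inv.
    apply (Rmult_le_reg_r (Rabs h)); auto.
    replace (L2 * (v - u) * Rabs dl * (Rabs dl * / Rabs h) * Rabs h) with (L2 * (dl * dl) * (v - u)).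
    rewrite Rmult_assoc, Rinv_l by lra. lra.
    replace (dl * dl) with (Rabs dl * Rabs dl) by (rewrite <- Rabs_mult; apply Rabs_right; nra). field. lra. }
  assert (Eq3 : Rabs ((q - rho) * J) = Rabs (q - rho) * Rabs J) by apply Rabs_mult.
  assert (Htri : Rabs (T1 / h + T2 / h - (q - rho) * J) <= Rabs (T1 / h) + Rabs (T2 / h) + Rabs ((q - rho) * J)).
  { unfold Rminus. eapply Rle_trans. apply Rabs_triang. rewrite Rabs_Ropp. apply Rplus_le_compat_r. apply Rabs_triang. }
  pose proof (Rabs_pos dl). pose proof (Rabs_pos q).
  assert (L2 * (v - u) * Rabs dl * Rabs q <= (Lx + L2 * (v - u)) * Rabs dl * Rabs q).
  { apply Rmult_le_compat_r; auto. apply Rmult_le_compat_r; auto. lra. }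
  assert (Lx * Rabs dl <= (Lx + L2 * (v - u)) * Rabs dl).
  { apply Rmult_le_compat_r; auto. nra. }
  replace ((T1 + (RI g0 u v + - dl * J + T2) - RI g0 u v) / h - - rho * J) with (T1 / h + T2 / h - (q - rho) * J) by (unfold q; field; intro; subst; rewrite Rabs_R0 in Hab; lra).
  lra.
Qed.

Definition Iin (F : R -> R) x := lF_lt F x /\ lt_rF F x.

Section Basic.
Variable F : R -> R.
Hypothesis HF : is_cont_dist_fun F.

Lemma F_mono : forall x y, x <= y -> F x <= F y.
Proof. destruct HF as [H _]. auto. Qed.
Lemma F_cont : continuity F.
Proof. destruct HF as (_&_&_&H). auto. Qed.

Lemma F_nonneg : forall x, 0 <= F x.
Proof.
  intros x. destruct (Rle_dec 0 (F x)) as [H|H]; auto. exfalso.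
  destruct HF as (_&H0&_). destruct (H0 (- F x)) as [M HM]. lra.
  specialize (HM (Rmin M x) (Rmin_l _ _)). pose proof (F_mono (Rmin M x) x (Rmin_r _ _)).
  unfold Rabs in HM; destruct Rcase_abs in HM; lra.
Qed.

Lemma F_le1 : forall x, F x <= 1.
Proof.
  intros x. destruct (Rle_dec (F x) 1) as [H|H]; auto. exfalso.
  destruct HF as (_&_&H0&_). destruct (H0 (F x - 1)) as [M HM]. lra.
  specialize (HM (Rmax M x) (Rmax_l _ _)). pose proof (F_mono x (Rmax M x) (Rmax_r _ _)).
  unfold Rabs in HM; destruct Rcase_abs in HM; lra.
Qed.

Lemma I_F : forall x, Iin F x -> 0 < F x < 1.
Proof.
  intros x [[w [Hw1 Hw2]] [z [Hz1 Hz2]]]. pose proof (F_mono w x). pose proof (F_mono x z). lra.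
Qed.

Lemma I_between : forall x y z, Iin F x -> Iin F y -> x <= z <= y -> Iin F z.
Proof.
  intros x y z [[w [Hw1 Hw2]] _] [_ [r [Hr1 Hr2]]] Hz. split.
  exists w; split; auto; lra. exists r; split; auto; lra.
Qed.

Lemma I_open : forall x, Iin F x -> exists d, 0 < d /\ forall y, x - d <= y <= x + d -> Iin F y.
Proof.
  intros x [[w [Hw1 Hw2]] [r [Hr1 Hr2]]].
  exists (Rmin ((x - w)/2) ((r - x)/2)). split. apply Rmin_pos; lra.
  intros y Hy. pose proof (Rmin_l ((x - w)/2) ((r - x)/2)). pose proof (Rmin_r ((x - w)/2) ((r - x)/2)).
  split. exists w; split; auto; lra. exists r; split; auto; lra.
Qed.

Lemma Rh_mono : forall x y, Iin F x -> Iin F y -> x <= y -> Rh F x <= Rh F y.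
Proof.
  intros x y Hx Hy Hxy. unfold Rh. apply Ropp_le_contravar.
  pose proof (I_F x Hx). pose proof (I_F y Hy). pose proof (F_mono x y Hxy).
  destruct (Req_dec (F x) (F y)) as [E|E]. rewrite E; lra.
  left. apply ln_increasing; lra.
Qed.

Lemma Rh_exp : forall x, F x < 1 -> F x = 1 - exp (- Rh F x).
Proof. intros. unfold Rh. rewrite Ropp_involutive, exp_ln by lra. ring. Qed.

Variable f : R -> R.
Hypothesis Hf : forall x, lF_lt F x -> lt_rF F x -> derivable_pt_lim F x (f x).

Lemma Rh_deriv : forall x, Iin F x -> derivable_pt_lim (Rh F) x (Rh' F f x).
Proof.
  intros x Hx. pose proof (I_F x Hx). unfold Rh, Rh'.
  assert (D1 : derivable_pt_lim (fun y => 1 - F y) x (0 - f x)).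
  { apply D_minus. apply D_const. apply Hf; apply Hx. }
  assert (D2 := D_comp _ ln x _ _ D1 (derivable_pt_lim_ln (1 - F x) ltac:(lra))).
  eapply D_ext; [| | exact (D_scal _ x _ (-1) D2)]. intros; cbv beta; ring.
  field. lra.
Qed.

Lemma Rh_cont : forall x, Iin F x -> continuity_pt (Rh F) x.
Proof. intros. apply derivable_continuous_pt. exists (Rh' F f x). apply Rh_deriv; auto. Qed.

End Basic.

Lemma pow_div : forall x y n, y <> 0 -> (x / y) ^ n = x ^ n / y ^ n.
Proof. intros. unfold Rdiv. rewrite Rpow_mult_distr, pow_inv. auto. Qed.

Lemma cond_psi : forall F f (a b : nat) u v e, is_cont_dist_fun F ->
  (forall x, lF_lt F x -> lt_rF F x -> derivable_pt_lim F x (f x)) ->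
  Iin F u -> Iin F v -> u < v -> Rh F u < Rh F v ->
  cond_exp_eq F f (S a) (S b) u v e ->
  RI (fun t => Psi b a (Rh F t - Rh F u) (Rh F v - Rh F u)) u v =
  (v - e) * (INR (fact a) * INR (fact b) / INR (fact (a + S b)) * (Rh F v - Rh F u) ^ (a + S b)).
Proof.
  intros F f a b u v e HF Hf Hu Hv Huv HR [pr Hpr].
  set (Rf := Rh F) in *. set (Sv := Rf v - Rf u).
  set (c0 := INR (fact a) * INR (fact b) / INR (fact (a + S b)) * Sv ^ (a + S b)).
  set (P := fun t => Psi b a (Rf t - Rf u) Sv).
  assert (HI : forall t, u <= t <= v -> Iin F t) by (intros; eapply I_between; [exact Hu| exact Hv| auto]).
  assert (pP : Riemann_integrable P u v).
  { exact (integ_comp (fun x => Psi b a (x - Rf u) Sv) Rf u v u v (cont_Psi _ _ _ _)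
      (fun t Ht => Rh_cont F HF f Hf t (HI t Ht)) ltac:(rewrite Rmin_left; lra) ltac:(rewrite Rmax_right; lra)). }
  assert (pg := RiemannInt_P10 c0 pP pr).
  assert (HSv : Sv <> 0) by (unfold Sv; lra).
  assert (HG : forall t, u <= t <= v -> derivable_pt_lim (fun t => t * P t) t
            (P t + c0 * (t * cond_dens F f (S a) (S b) u v t))).
  { intros t Ht.
    assert (Dd : derivable_pt_lim (fun t => Rf t - Rf u) t (Rh' F f t - 0)).
    { apply D_minus. apply Rh_deriv; auto. apply D_const. }
    eapply D_ext; [| | exact (D_mult _ _ t _ _ (D_id t) (D_comp _ (fun z => Psi b a z Sv) t _ _ Dd (Psi_dx b a Sv (Rf t - Rf u))))].
    intros; reflexivity.
    unfold cond_dens. replace (S a + S b - 1)%nat with (a + S b)%nat by lia. replace (S a - 1)%nat with a by lia.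
    replace (S b - 1)%nat with b by lia. fold Rf. fold Sv. rewrite !pow_div by auto.
    replace (Sv - (Rf t - Rf u)) with (Rf v - Rf t) by (unfold Sv; ring).
    unfold c0. rewrite pow_add. cbn [pow].
    pose proof (INR_fact_neq_0 a). pose proof (INR_fact_neq_0 b). pose proof (INR_fact_neq_0 (a + S b)).
    pose proof (pow_nonzero Sv a HSv). pose proof (pow_nonzero Sv b HSv).
    unfold P. field. repeat split; auto. }
  assert (HF1 : RiemannInt pg = v * P v - u * P u) by exact (FTC_gen _ _ u v pg ltac:(lra) HG).
  pose proof (RiemannInt_P13 pP pr pg) as E13.
  assert (K1 : RiemannInt pP + c0 * RiemannInt pr = v * P v - u * P u) by (etransitivity; [symmetry; exact E13| exact HF1]).
  rewrite Hpr in K1. clear HF1 E13.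
  rewrite (RI_eq _ _ _ pP).
  assert (Pv : P v = c0).
  { unfold P. fold Sv. rewrite Psi_diag. unfold c0. replace (a + b + 1)%nat with (a + S b)%nat by lia. auto. }
  assert (Pu : P u = 0). { unfold P. rewrite Rminus_diag. apply Psi_0. }
  rewrite Pv, Pu in K1. fold c0. lra.
Qed.

Lemma cond_zero : forall F f kk r u v e, u <= v -> Rh F u = Rh F v -> cond_exp_eq F f kk r u v e -> e = 0.
Proof.
  intros F f kk r u v e Huv HR [pr Hpr]. rewrite <- Hpr, <- (RI_eq _ _ _ pr).
  apply RI_zero; auto. intros t Ht. unfold cond_dens.
  replace (Rh F v - Rh F u) with 0 by lra. unfold Rdiv. rewrite Rinv_0. ring.
Qed.

Lemma lF_lt_mid : forall F x, lF_lt F x -> exists w, w < x /\ lF_lt F w.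
Proof.
  intros F x [w [Hw1 Hw2]]. exists ((w + x) / 2). split. lra. exists w. split; auto. lra.
Qed.

Section Fwd.
Variables F f : R -> R.
Hypothesis HF : is_cont_dist_fun F.
Hypothesis Hf : forall x, lF_lt F x -> lt_rF F x -> derivable_pt_lim F x (f x).
Variables k0 r0 : nat.
Hypothesis H1 : forall u v, lF_lt F u -> u < v -> lt_rF F v ->
  cond_exp_eq F f (S (S k0)) (S (S r0)) u v
    ((INR (S (S r0)) * u + INR (S (S k0)) * v) / (INR (S (S k0)) + INR (S (S r0)))).
Hypothesis H2 : forall u u2 v, lF_lt F u -> u < u2 -> u2 < v -> lt_rF F v ->
  cond_exp_eq F f (S k0) (S (S r0)) u2 v
    ((INR (S (S r0)) * u2 + INR (S k0) * v) / (INR (S (S r0)) + INR (S k0))).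

Lemma H2' : forall u v, Iin F u -> u < v -> lt_rF F v ->
  cond_exp_eq F f (S k0) (S (S r0)) u v
    ((INR (S (S r0)) * u + INR (S k0) * v) / (INR (S (S r0)) + INR (S k0))).
Proof.
  intros u v [Hu _] Huv Hv. destruct (lF_lt_mid F u Hu) as [w [Hw1 Hw2]]. eapply H2; eauto.
Qed.

Lemma Rh_pos : forall u v, Iin F u -> Iin F v -> u < v -> Rh F u < Rh F v.
Proof.
  intros u v Hu Hv Huv. destruct (Rle_lt_or_eq_dec _ _ (Rh_mono F HF u v Hu Hv (Rlt_le _ _ Huv))) as [H|H]; auto.
  exfalso. set (m := (u + v) / 2).
  assert (Hm : Iin F m) by (eapply I_between; [exact Hu|exact Hv| unfold m; lra]).
  assert (Hm1 : Rh F m = Rh F v).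
  { pose proof (Rh_mono F HF u m Hu Hm ltac:(unfold m; lra)). pose proof (Rh_mono F HF m v Hm Hv ltac:(unfold m; lra)). lra. }
  assert (E1 := cond_zero F f _ _ u v _ (Rlt_le _ _ Huv) H (H1 u v (proj1 Hu) Huv (proj2 Hv))).
  assert (E2 := cond_zero F f _ _ m v _ ltac:(unfold m; lra) Hm1 (H1 m v (proj1 Hm) ltac:(unfold m; lra) (proj2 Hv))).
  assert (Hk : 0 < INR (S (S k0)) + INR (S (S r0))) by (pose proof (INR_S_pos (S k0)); pose proof (INR_S_pos (S r0)); lra).
  assert (Hr : 0 < INR (S (S r0))) by apply INR_S_pos.
  unfold Rdiv in E1, E2.
  apply Rmult_integral in E1. apply Rmult_integral in E2.
  destruct E1 as [E1|E1]; [|pose proof (Rinv_neq_0_compat _ (Rgt_not_eq _ _ Hk)); contradiction].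
  destruct E2 as [E2|E2]; [|pose proof (Rinv_neq_0_compat _ (Rgt_not_eq _ _ Hk)); contradiction].
  unfold m in E2. nra.
Qed.

Lemma key : forall u v, Iin F u -> Iin F v -> u < v -> Rh F v - Rh F u = Rh' F f u * (v - u).
Proof.
  intros u v Hu Hv Huv.
  destruct (I_open F u Hu) as [d [Hd HId]].
  assert (HIc : forall c, u - d <= c <= v -> Iin F c).
  { intros c Hc. destruct (Rle_dec c u). apply HId; lra. eapply I_between; [exact Hu|exact Hv|lra]. }
  assert (Hcont : forall t, u - d <= t <= v -> continuity_pt (Rh F) t).
  { intros. apply (Rh_cont F HF f Hf). auto. }
  assert (Hmono : forall t1 t2, u - d <= t1 -> t1 <= t2 -> t2 <= v -> Rh F t1 <= Rh F t2).
  { intros. apply Rh_mono; auto; apply HIc; lra. }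
  assert (L := leibniz (Rh F) (S r0) k0 u v d (Rh' F f u) Hd Huv Hcont Hmono (Rh_deriv F HF f Hf u Hu)).
  set (kR := INR (S (S k0))). set (rR := INR (S (S r0))).
  set (C := INR (fact (S k0)) * INR (fact (S r0)) / INR (fact (S k0 + S (S r0)))).
  set (N := (S k0 + S (S r0))%nat).
  set (Q := fun c => (v - (rR * c + kR * v) / (kR + rR)) * (C * (Rh F v - Rh F c) ^ N)).
  assert (Hloc : forall c, Rabs (c - u) < Rmin d (v - u) ->
     Q c = RI (fun t => Psi (S r0) (S k0) (Rh F t - Rh F c) (Rh F v - Rh F c)) c v).
  { intros c Hc. assert (Hc1 : Rabs (c - u) < d) by (eapply Rlt_le_trans; [exact Hc| apply Rmin_l]).
    assert (Hc2 : Rabs (c - u) < v - u) by (eapply Rlt_le_trans; [exact Hc| apply Rmin_r]).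
    assert (Hcs : u - d < c < v) by (unfold Rabs in Hc1, Hc2; destruct (Rcase_abs (c - u)); lra).
    assert (Ic : Iin F c) by (apply HIc; lra).
    rewrite (cond_psi F f (S k0) (S r0) c v _ HF Hf Ic Hv (proj2 Hcs) (Rh_pos c v Ic Hv (proj2 Hcs))
       (H1 c v (proj1 Ic) (proj2 Hcs) (proj2 Hv))).
    unfold Q, C, N, kR, rR. reflexivity. }
  assert (DQ : exists l, derivable_pt_lim Q u l /\ l =
     (0 - ((rR * 1 + 0) * / (kR + rR) + (rR * u + kR * v) * 0)) * (C * (Rh F v - Rh F u) ^ N) +
     (v - (rR * u + kR * v) / (kR + rR)) * (C * (INR N * (Rh F v - Rh F u) ^ pred N * (0 - Rh' F f u)))).
  { eexists; split.
    eapply D_ext; [| | exact (D_mult _ _ u _ _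
        (D_minus _ _ u _ _ (D_const v u) (D_mult _ _ u _ _ (D_plus _ _ u _ _ (D_scal _ u _ rR (D_id u)) (D_const (kR * v) u)) (D_const (/ (kR + rR)) u)))
        (D_scal _ u _ C (D_pow (fun c => Rh F v - Rh F c) u _ N (D_minus _ _ u _ _ (D_const (Rh F v) u) (Rh_deriv F HF f Hf u Hu)))))].
    intros; unfold Q; cbv beta; unfold Rdiv; reflexivity. reflexivity. reflexivity. }
  destruct DQ as [lQ [DQ ElQ]].
  assert (Hmin : 0 < Rmin d (v - u)) by (apply Rmin_pos; lra).
  assert (DPhi := D_local Q _ u lQ _ Hmin Hloc DQ).
  assert (Eq := uniqueness_limite _ _ _ _ DPhi L).
  assert (HEd : RI (fun t => Ed (S r0) (S k0) (Rh F t - Rh F u) (Rh F v - Rh F u)) u v =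
     INR (S k0) * RI (fun t => Psi (S r0) k0 (Rh F t - Rh F u) (Rh F v - Rh F u)) u v).
  { replace (fun t => Ed (S r0) (S k0) (Rh F t - Rh F u) (Rh F v - Rh F u)) with
      (fun t => INR (S k0) * Psi (S r0) k0 (Rh F t - Rh F u) (Rh F v - Rh F u))
      by (apply functional_extensionality; intros; rewrite Ed_S; auto).
    apply RI_scal.
    exact (integ_comp (fun x => Psi (S r0) k0 (x - Rh F u) (Rh F v - Rh F u)) (Rh F) (u - d) v u v (cont_Psi _ _ _ _)
      Hcont ltac:(rewrite Rmin_left; lra) ltac:(rewrite Rmax_right; lra)). }
  rewrite HEd in Eq.
  rewrite (cond_psi F f k0 (S r0) u v _ HF Hf Hu Hv Huv (Rh_pos u v Hu Hv Huv) (H2' u v Hu Huv (proj2 Hv))) in Eq.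
  rewrite ElQ in Eq. clear ElQ DPhi L DQ Hloc.
  set (s := Rh F v - Rh F u) in *. set (rho := Rh' F f u) in *.
  set (n' := (k0 + S (S r0))%nat) in *.
  assert (HN : N = S n') by reflexivity. unfold C in Eq. rewrite HN in Eq. cbn [pred] in Eq.
  change (fact (S k0 + S (S r0))) with (fact (S n')) in Eq.
  change (fact (S n')) with (S n' * fact n')%nat in Eq.
  change (fact (S k0)) with (S k0 * fact k0)%nat in Eq.
  rewrite !mult_INR in Eq.
  set (fk := INR (fact k0)) in *. set (fr := INR (fact (S r0))) in *. set (fn := INR (fact n')) in *.
  assert (Hs : 0 < s) by (unfold s; apply Rh_pos in Huv; auto; lra).
  set (P := s ^ n') in *. change (s ^ S n') with (s * P) in Eq.
  assert (HP : 0 < P) by (apply pow_lt; auto).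
  assert (Hfk : 0 < fk) by (apply lt_0_INR, lt_O_fact).
  assert (Hfr : 0 < fr) by (apply lt_0_INR, lt_O_fact).
  assert (Hfn : 0 < fn) by (apply lt_0_INR, lt_O_fact).
  unfold kR, rR in Eq. unfold n' in Eq.
  rewrite !S_INR, !plus_INR, !S_INR in Eq.
  set (K0 := INR k0) in *. set (R0 := INR r0) in *.
  assert (HK0 : 0 <= K0) by apply pos_INR. assert (HR0 : 0 <= R0) by apply pos_INR.
  match type of Eq with ?A = ?B =>
    assert (Z : A - B = - ((R0 + 2) * (K0 + 1) * (fk * fr / fn) * P / ((K0 + R0 + 3) * (K0 + R0 + 4))) * (s - rho * (v - u)))
  end.
  { field. repeat split; apply Rgt_not_eq; lra. }
  rewrite Eq, Rminus_diag in Z.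
  assert (Hc : 0 < (R0 + 2) * (K0 + 1) * (fk * fr / fn) * P / ((K0 + R0 + 3) * (K0 + R0 + 4))).
  { unfold Rdiv. repeat apply Rmult_lt_0_compat; try apply Rinv_0_lt_compat; try nra. }
  symmetry in Z. apply Rmult_integral in Z. destruct Z as [Z|Z]. lra. lra.
Qed.
End Fwd.

Lemma IVT_val : forall F x y c, continuity F -> x < y -> F x < c -> c < F y ->
  exists z, x <= z <= y /\ F z = c.
Proof.
  intros F x y c HF Hxy H1 H2.
  assert (Hc : continuity (fun t => F t - c)).
  { exact (continuity_minus F (fct_cte c) HF (continuity_const (fct_cte c) (fun _ _ => eq_refl))). }
  destruct (IVT (fun t => F t - c) x y Hc Hxy ltac:(lra) ltac:(lra)) as [z [Hz1 Hz2]].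
  exists z. split; auto. lra.
Qed.

Lemma Iin_of_val : forall F p, continuity F -> 0 < F p < 1 -> Iin F p.
Proof.
  intros F p HF Hp. split.
  - destruct (HF p (F p) ltac:(lra)) as [d [Hd Hd']].
    exists (p - d / 2). split. lra.
    assert (H := Hd' (p - d/2)). simpl in H. unfold Rdist, D_x, no_cond in H.
    assert (Rabs (F (p - d / 2) - F p) < F p). apply H. split. split; auto. lra.
    replace (p - d / 2 - p) with (- (d/2)) by ring. rewrite Rabs_Ropp, Rabs_right; lra.
    unfold Rabs in H0; destruct Rcase_abs in H0; lra.
  - destruct (HF p (1 - F p) ltac:(lra)) as [d [Hd Hd']].
    exists (p + d / 2). split. lra.
    assert (H := Hd' (p + d/2)). simpl in H. unfold Rdist, D_x, no_cond in H.
    assert (Rabs (F (p + d / 2) - F p) < 1 - F p). apply H. split. split; auto. lra.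
    replace (p + d / 2 - p) with (d/2) by ring. rewrite Rabs_right; lra.
    unfold Rabs in H0; destruct Rcase_abs in H0; lra.
Qed.

Lemma I_nonempty : forall F, is_cont_dist_fun F -> exists x0, Iin F x0.
Proof.
  intros F HF. pose proof HF as (Hm&H0&H1&Hc).
  destruct (H0 (1/2) ltac:(lra)) as [M1 HM1]. destruct (H1 (1/2) ltac:(lra)) as [M2 HM2].
  specialize (HM1 M1 (Rle_refl _)). specialize (HM2 M2 (Rle_refl _)).
  apply Rabs_def2 in HM1. apply Rabs_def2 in HM2.
  assert (M1 < M2). { destruct (Rlt_le_dec M1 M2); auto. pose proof (Hm M2 M1 r). lra. }
  destruct (IVT_val F M1 M2 (1/2) Hc H ltac:(lra) ltac:(lra)) as [p [_ Hp]].
  exists p. apply Iin_of_val; auto. lra.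
Qed.

Lemma expo_form : forall F (Rd : R -> R), is_cont_dist_fun F ->
  (forall u v, Iin F u -> Iin F v -> u < v -> Rh F u < Rh F v) ->
  (forall u v, Iin F u -> Iin F v -> u < v -> Rh F v - Rh F u = Rd u * (v - u)) ->
  exists l c, is_lF F l /\ rF_infinite F /\ 0 < c /\
     forall x, l <= x -> F x = 1 - exp (- c * (x - l)).
Proof.
  intros F Rd HF Hpos Hkey.
  assert (Hc := F_cont F HF).
  destruct (I_nonempty F HF) as [x0 Hx0].
  set (r0 := Rd x0).
  destruct (I_open F x0 Hx0) as [d [Hd HId]].
  assert (Hy : Iin F (x0 + d)) by (apply HId; lra).
  assert (Hr0 : 0 < r0).
  { pose proof (Hkey x0 (x0 + d) Hx0 Hy ltac:(lra)). pose proof (Hpos x0 (x0 + d) Hx0 Hy ltac:(lra)).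
    fold r0 in H. nra. }
  assert (Hlin : forall x, Iin F x -> Rh F x = Rh F x0 + r0 * (x - x0)).
  { intros x Hx. destruct (Rtotal_order x x0) as [Hlt|[Heq|Hgt]].
    - pose proof (Hkey x x0 Hx Hx0 Hlt) as E1.
      pose proof (Hkey x (x0 + d) Hx Hy ltac:(lra)) as E2.
      pose proof (Hkey x0 (x0 + d) Hx0 Hy ltac:(lra)) as E3. fold r0 in E3.
      assert (Rd x = r0).
      { apply (Rmult_eq_reg_r d); [|lra]. nra. }
      rewrite H in E1. lra.
    - subst; ring.
    - pose proof (Hkey x0 x Hx0 Hx Hgt). fold r0 in H. lra. }
  assert (HFx0 := I_F F HF x0 Hx0).
  assert (HR0 : Rh F x0 > 0).
  { unfold Rh. assert (0 < 1 - F x0 < 1) by lra.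
    assert (ln (1 - F x0) < 0). { rewrite <- ln_1. apply ln_increasing; lra. } lra. }
  assert (HrF : rF_infinite F).
  { intros x. destruct (Rlt_le_dec (F x) 1) as [H|H]; auto. exfalso.
    assert (Hxx0 : x0 < x).
    { destruct (Rlt_le_dec x0 x); auto. pose proof (F_mono F HF x x0 r). lra. }
    set (q0 := 1 - exp (- (Rh F x0 + r0 * (x - x0)))).
    assert (Hq0 : F x0 <= q0).
    { rewrite (Rh_exp F x0) by lra. unfold q0.
      assert (exp (- (Rh F x0 + r0 * (x - x0))) <= exp (- Rh F x0)).
      { destruct (Req_dec (- (Rh F x0 + r0 * (x - x0))) (- Rh F x0)) as [E|E]. rewrite E; lra.
        left; apply exp_increasing. nra. }
      lra. }
    assert (Hq1 : q0 < 1) by (unfold q0; pose proof (exp_pos (- (Rh F x0 + r0 * (x - x0)))); lra).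
    destruct (IVT_val F x0 x ((q0 + 1) / 2) Hc Hxx0 ltac:(lra) ltac:(lra)) as [y [Hy1 Hy2]].
    assert (Iy : Iin F y) by (apply Iin_of_val; auto; pose proof (F_nonneg F HF x0); lra).
    rewrite (Rh_exp F y) in Hy2 by lra. rewrite (Hlin y Iy) in Hy2.
    assert (exp (- (Rh F x0 + r0 * (x - x0))) <= exp (- (Rh F x0 + r0 * (y - x0)))).
    { destruct (Req_dec y x) as [E|E]. subst; lra. left; apply exp_increasing. nra. }
    unfold q0 in *. lra. }
  set (l := x0 - Rh F x0 / r0).
  assert (Hlin2 : forall x, Iin F x -> Rh F x = r0 * (x - l)).
  { intros x Hx. rewrite Hlin; auto. unfold l. field. lra. }
  assert (Hx0l : l < x0). { unfold l. assert (0 < Rh F x0 / r0) by (apply Rdiv_lt_0_compat; lra). lra. }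
  assert (Hform : forall x, Iin F x -> F x = 1 - exp (- r0 * (x - l))).
  { intros x Hx. rewrite (Rh_exp F x) by (apply (I_F F HF x Hx)). rewrite Hlin2; auto. f_equal. f_equal. ring. }
  assert (Hpos2 : forall x, 0 < F x -> l < x).
  { intros x Hx. assert (Ix : Iin F x) by (apply Iin_of_val; auto).
    rewrite (Hform x Ix) in Hx. destruct (Rlt_le_dec l x); auto.
    assert (exp 0 <= exp (- r0 * (x - l))).
    { destruct (Req_dec x l). subst. rewrite Rminus_diag, Rmult_0_r; lra. left; apply exp_increasing. nra. }
    rewrite exp_0 in H. lra. }
  assert (Hgt : forall x, l < x -> Iin F x).
  { intros x Hx. destruct (Rle_dec x0 x) as [H|H].
    - apply Iin_of_val; auto. split; [|apply HrF]. pose proof (F_mono F HF x0 x H). lra.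
    - destruct (Rlt_le_dec 0 (F x)) as [H0|H0].
      + apply Iin_of_val; auto.
      + exfalso. pose proof (F_nonneg F HF x).
        set (m := 1 - exp (- r0 * (x - l))).
        assert (Hm : 0 < m).
        { unfold m. assert (exp (- r0 * (x - l)) < exp 0) by (apply exp_increasing; nra). rewrite exp_0 in H2. lra. }
        assert (Hm1 : m <= F x0).
        { rewrite (Hform x0 Hx0). unfold m.
          assert (exp (- r0 * (x0 - l)) <= exp (- r0 * (x - l))) by (left; apply exp_increasing; nra). lra. }
        destruct (IVT_val F x x0 (m / 2) Hc ltac:(lra) ltac:(lra) ltac:(lra)) as [y [Hy1 Hy2]].
        assert (Iy : Iin F y) by (apply Iin_of_val; auto; split; [lra|apply HrF]).
        rewrite (Hform y Iy) in Hy2.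
        assert (exp (- r0 * (y - l)) <= exp (- r0 * (x - l))).
        { destruct (Req_dec y x). subst; lra. left; apply exp_increasing. nra. }
        unfold m in *. lra. }
  exists l, r0. split; [|split; [auto|split; [auto|]]].
  - split.
    + intros x Hx. left. apply Hpos2; auto.
    + intros b Hb. destruct (Rle_dec b l) as [H|H]; auto. exfalso.
      assert (Ix : Iin F ((l + b) / 2)) by (apply Hgt; lra).
      pose proof (I_F F HF _ Ix). specialize (Hb _ (proj1 H0)). lra.
  - intros x Hx. destruct (Rle_lt_or_eq_dec _ _ Hx) as [H|H].
    + apply Hform, Hgt; auto.
    + subst x. rewrite Rminus_diag, Rmult_0_r, exp_0.
      pose proof (F_nonneg F HF l). destruct (Rle_lt_or_eq_dec _ _ H) as [H0|H0].
      * apply Hpos2 in H0. lra.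
      * lra.
Qed.

Lemma bwd : forall F f l c (a b : nat),
  (forall x, lF_lt F x -> lt_rF F x -> derivable_pt_lim F x (f x)) ->
  is_lF F l -> rF_infinite F -> 0 < c -> (forall x, l <= x -> F x = 1 - exp (- c * (x - l))) ->
  forall u v, lF_lt F u -> u < v -> lt_rF F v ->
  cond_exp_eq F f (S a) (S b) u v ((INR (S b) * u + INR (S a) * v) / (INR (S a) + INR (S b))).
Proof.
  intros F f l c a b Hf [Hl1 Hl2] HrF Hc Hform u v Hu Huv Hv.
  assert (Hlu : l < u). { destruct Hu as [x [Hx1 Hx2]]. pose proof (Hl1 x Hx2). lra. }
  assert (HRh : forall t, l <= t -> Rh F t = c * (t - l)).
  { intros t Ht. unfold Rh. rewrite Hform by auto. replace (1 - (1 - exp (- c * (t - l)))) with (exp (- c * (t - l))) by ring.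
    rewrite ln_exp. ring. }
  assert (Hfv : forall t, u <= t -> f t = c * exp (- c * (t - l))).
  { intros t Ht. apply (uniqueness_limite F t).
    - apply Hf. destruct Hu as [x [Hx1 Hx2]]. exists x; split; auto; lra. exists (t + 1). split. lra. apply HrF.
    - apply (D_local (fun y => 1 - exp (- c * (y - l))) F t _ (t - l)). lra.
      { intros y Hy. rewrite Hform; auto. unfold Rabs in Hy; destruct Rcase_abs in Hy; lra. }
      assert (D1 : derivable_pt_lim (fun y => - c * (y - l)) t (- c * (1 - 0))).
      { apply D_scal. apply D_minus. apply D_id. apply D_const. }
      eapply D_ext; [| |exact (D_minus _ _ t _ _ (D_const 1 t) (D_comp _ exp t _ _ D1 (derivable_pt_lim_exp _)))].
      intros; reflexivity. ring. }
  assert (HRh' : forall t, u <= t -> Rh' F f t = c).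
  { intros t Ht. unfold Rh'. rewrite Hfv, Hform by lra.
    replace (1 - (1 - exp (- c * (t - l)))) with (exp (- c * (t - l))) by ring. field. apply Rgt_not_eq, exp_pos. }
  set (Sv := v - u). assert (HSv : 0 < Sv) by (unfold Sv; lra).
  set (N := (a + S b)%nat).
  set (K := INR (fact N) / (INR (fact a) * INR (fact b))).
  set (h := fun t => K / Sv ^ N * ((t - u) ^ S a * (v - t) ^ b + u * ((t - u) ^ a * (v - t) ^ b))).
  assert (Hdens : forall t, u <= t <= v -> t * cond_dens F f (S a) (S b) u v t = h t).
  { intros t Ht. unfold cond_dens. replace (S a + S b - 1)%nat with N by (unfold N; lia).
    replace (S a - 1)%nat with a by lia. replace (S b - 1)%nat with b by lia.
    rewrite !HRh by lra. rewrite HRh' by lra.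
    replace (c * (t - l) - c * (u - l)) with (c * (t - u)) by ring.
    replace (c * (v - l) - c * (u - l)) with (c * Sv) by (unfold Sv; ring).
    replace (c * (v - l) - c * (t - l)) with (c * (v - t)) by ring.
    assert (c * Sv <> 0) by (apply Rgt_not_eq; nra).
    rewrite !pow_div by auto. rewrite !Rpow_mult_distr.
    unfold h, K, N. rewrite pow_add. cbn [pow]. fold Sv.
    pose proof (INR_fact_neq_0 a). pose proof (INR_fact_neq_0 b).
    pose proof (pow_nonzero Sv a (Rgt_not_eq _ _ HSv)). pose proof (pow_nonzero Sv b (Rgt_not_eq _ _ HSv)).
    pose proof (pow_nonzero c a (Rgt_not_eq _ _ Hc)). pose proof (pow_nonzero c b (Rgt_not_eq _ _ Hc)).
    field. repeat split; auto; apply Rgt_not_eq; lra. }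
  assert (ph : Riemann_integrable h u v).
  { apply continuity_implies_RiemannInt. lra. intros; unfold h; reg. }
  assert (pr : Riemann_integrable (fun t => t * cond_dens F f (S a) (S b) u v t) u v).
  { refine (@Riemann_integrable_ext h _ u v _ ph). intros x Hx. rewrite Rmin_left, Rmax_right in Hx by lra.
    symmetry; apply Hdens; auto. }
  exists pr.
  set (G := fun t => K / Sv ^ N * (Psi b (S a) (t - u) Sv + u * Psi b a (t - u) Sv)).
  assert (HG : forall t, u <= t <= v -> derivable_pt_lim G t (t * cond_dens F f (S a) (S b) u v t)).
  { intros t Ht. rewrite Hdens by auto.
    assert (Dt : derivable_pt_lim (fun t => t - u) t (1 - 0)) by (apply D_minus; [apply D_id|apply D_const]).
    eapply D_ext; [| | exact (D_scal _ t _ (K / Sv ^ N) (D_plus _ _ t _ _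
        (D_comp _ (fun z => Psi b (S a) z Sv) t _ _ Dt (Psi_dx b (S a) Sv (t - u)))
        (D_scal _ t _ u (D_comp _ (fun z => Psi b a z Sv) t _ _ Dt (Psi_dx b a Sv (t - u))))))].
    intros; reflexivity.
    unfold h. replace (Sv - (t - u)) with (v - t) by (unfold Sv; ring). cbn [pow]. ring. }
  rewrite (FTC_gen _ G u v pr (Rlt_le _ _ Huv) HG).
  unfold G. rewrite Rminus_diag, !Psi_0. replace (v - u) with Sv by reflexivity.
  rewrite !Psi_diag. replace (S a + b + 1)%nat with (S N) by (unfold N; lia).
  replace (a + b + 1)%nat with N by (unfold N; lia).
  unfold K. change (fact (S a)) with (S a * fact a)%nat. change (fact (S N)) with (S N * fact N)%nat.
  rewrite !mult_INR. cbn [pow].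
  pose proof (INR_fact_neq_0 a). pose proof (INR_fact_neq_0 b). pose proof (INR_fact_neq_0 N).
  pose proof (pow_nonzero Sv N (Rgt_not_eq _ _ HSv)).
  unfold N. rewrite !S_INR, !plus_INR, !S_INR. unfold Sv.
  pose proof (pos_INR a). pose proof (pos_INR b).
  field. repeat split; try (apply Rgt_not_eq; lra); auto.
Qed.


Theorem mainTheorem4 (n k r : nat) (F f : R -> R)
  (Hn : (3 <= n)%nat) (Hr : (2 <= r)%nat) (Hk1 : (2 <= k)%nat) (Hk2 : (k <= n - 1)%nat)
  (HF : is_cont_dist_fun F)
  (Hf : forall x, lF_lt F x -> lt_rF F x -> derivable_pt_lim F x (f x)) :
  ((forall u v, lF_lt F u -> u < v -> lt_rF F v ->
      cond_exp_eq F f k r u v ((INR r * u + INR k * v) / (INR k + INR r))) /\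
   (forall u u2 v, lF_lt F u -> u < u2 -> u2 < v -> lt_rF F v ->
      cond_exp_eq F f (k - 1) r u2 v
        ((INR r * u2 + INR (k - 1) * v) / (INR r + INR (k - 1)))))
  <->
  (exists lF c, is_lF F lF /\ rF_infinite F /\ 0 < c /\
     forall x, lF <= x -> F x = 1 - exp (- c * (x - lF))).
Proof.
  destruct k as [|[|k0]]; try lia. destruct r as [|[|r0]]; try lia.
  replace (S (S k0) - 1)%nat with (S k0) by lia.
  split.
  - intros [H1 H2].
    apply (expo_form F (Rh' F f) HF (Rh_pos F f HF k0 r0 H1) (key F f HF Hf k0 r0 H1 H2)).
  - intros [l [c [Hl [HrF [Hc Hform]]]]]. split.
    + intros u v Hu Huv Hv. apply (bwd F f l c (S k0) (S r0)); auto.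
    + intros u u2 v Hu Huu2 Hu2v Hv. rewrite (Rplus_comm (INR (S (S r0)))).
      apply (bwd F f l c k0 (S r0)); auto.
      destruct Hu as [x [Hx1 Hx2]]. exists x. split; auto. lra.
Qed.
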